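(* Let $p,n\in\mathbb N$ with $p\ge n\ge 7$, and let $G\in Ex(p;T_n^2)$. If $G$ is connected, then $\Delta(G)=n-4$ and $e(G)=\big[\tfrac{(n-4)p}{2}\big]$.
   Context: All graphs are finite and simple; a graph ''contains'' $H$ if it has a subgraph isomorphic to $H$. $[x]$ denotes the greatest integer not exceeding $x$; $e(G)$ is the number of edges and $\Delta(G)$ the maximum degree of $G$. For a graph $L$ and $p\in\mathbb N$, $ex(p;L)$ is the maximum number of edges in a graph on $p$ vertices containing no copy of $L$, and $Ex(p;L)$ is the set of graphs on $p$ vertices containing no copy of $L$ and having exactly $ex(p;L)$ edges. For $n\ge 5$, $T_n^2$ is the tree with vertex set $\{v_0,\ldots,v_{n-1}\}$ and edge set $\{v_0v_1,\ldots,v_0v_{n-3},\,v_{n-3}v_{n-2},\,v_{n-3}v_{n-1}\}$. *)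

(* Defs.v *)
From mathcomp Require Import all_boot.
Set Implicit Arguments. Unset Strict Implicit. Unset Printing Implicit Defensive.

Definition simple_graph (p : nat) (g : rel 'I_p) : Prop :=
  symmetric g /\ irreflexive g.

Definition n_edges (p : nat) (g : rel 'I_p) : nat :=
  #|[set xy : 'I_p * 'I_p | g xy.1 xy.2 && (xy.1 < xy.2)%N]|.

Definition degree (p : nat) (g : rel 'I_p) (x : 'I_p) : nat :=
  #|[set y | g x y]|.

(* Delta(G): maximum degree (0 for the empty vertex set). *)
Definition max_degree (p : nat) (g : rel 'I_p) : nat :=
  \max_(x : 'I_p) degree g x.

Definition connected (p : nat) (g : rel 'I_p) : Prop :=
  forall x y : 'I_p, connect g x y.

Definition contains (p q : nat) (g : rel 'I_p) (h : rel 'I_q) : Prop :=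
  exists f : 'I_q -> 'I_p, injective f /\ forall i j, h i j -> g (f i) (f j).

Definition T2_arc (n : nat) (i j : 'I_n) : bool :=
  ((i == 0 :> nat) && (1 <= j <= n - 3)%N)
  || ((i == n - 3 :> nat) && ((j == n - 2 :> nat) || (j == n - 1 :> nat))).

Definition T2 (n : nat) : rel 'I_n := fun i j => T2_arc i j || T2_arc j i.

(* G in Ex(p;L): G is an L-free graph on p vertices with ex(p;L) edges,
   i.e. no L-free graph on p vertices has more edges than G. *)
Definition in_Ex (p q : nat) (L : rel 'I_q) (g : rel 'I_p) : Prop :=
  simple_graph g /\ ~ contains g L /\
  forall h : rel 'I_p, simple_graph h -> ~ contains h L -> n_edges h <= n_edges g.

Arguments T2 n : clear implicits.

(* Main.v *)
Require Import Defs.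
From mathcomp Require Import all_boot zify.
Set Implicit Arguments. Unset Strict Implicit. Unset Printing Implicit Defensive.

Lemma card_sum (T : finType) (P : pred T) : #|[set y | P y]| = \sum_y (P y : nat).
Proof.
rewrite -sum1_card big_mkcond /=; apply: eq_bigr => y _; rewrite inE; by case: (P y).
Qed.

Lemma deg_sum p (g : rel 'I_p) x : degree g x = \sum_y (g x y : nat).
Proof. exact: card_sum. Qed.

Lemma edges2 p (g : rel 'I_p) : symmetric g -> irreflexive g ->
  2 * n_edges g = \sum_x degree g x.
Proof.
move=> sg ig.
have E : n_edges g = \sum_x \sum_y (g x y && (x < y) : nat).
  rewrite /n_edges card_sum.
  rewrite (pair_bigA _ (fun x y => (g x y && (x < y) : nat))) /=. by [].
have E' : \sum_x \sum_y (g x y && (y < x) : nat) = n_edges g.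
  rewrite E exchange_big /=; apply: eq_bigr => x _; apply: eq_bigr => y _.
  by rewrite sg.
rewrite mul2n -addnn -{1}E' E -big_split /=.
apply: eq_bigr => x _; rewrite deg_sum -big_split /=; apply: eq_bigr => y _.
case: (ltngtP x y) => H; rewrite ?andbT ?andbF ?addn0 //.
have -> : y = x by apply: val_inj.
by rewrite ig.
Qed.

Lemma noT p n (g : rel 'I_p) v u w1 w2 (L : {set 'I_p}) :
  simple_graph g -> ~ contains g (T2 n) -> 4 <= n ->
  g v u -> g u w1 -> g u w2 -> w1 != w2 -> w1 != v -> w2 != v ->
  L \subset [set x | g v x] -> u \notin L -> w1 \notin L -> w2 \notin L ->
  n - 4 <= #|L| -> False.
Proof.
move=> [sg ig] nT n4 gvu guw1 guw2 w12 w1v w2v sL uL w1L w2L cL.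
have vL : v \notin L.
  apply/negP => /(subsetP sL); by rewrite inE ig.
have uv : u != v by apply/negP => /eqP E; move: gvu; rewrite E ig.
have uw1 : u != w1 by apply/negP => /eqP E; move: guw1; rewrite E ig.
have uw2 : u != w2 by apply/negP => /eqP E; move: guw2; rewrite E ig.
pose f (i : 'I_n) : 'I_p :=
  if (i : nat) == 0 then v else if i <= n - 4 then nth v (enum L) i.-1
  else if (i : nat) == n - 3 then u else if (i : nat) == n - 2 then w1 else w2.
pose gi (x : 'I_p) : nat :=
  if x == v then 0 else if x \in L then (index x (enum L)).+1
  else if x == u then n - 3 else if x == w1 then n - 2 else n - 1.
have cL' : n - 4 <= size (enum L) by rewrite -cardE.
have Lin : forall j, j < n - 4 -> nth v (enum L) j \in L.
  move=> j hj; rewrite -mem_enum; apply: mem_nth; exact: leq_trans hj cL'.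
have gif : forall i, gi (f i) = i.
  move=> i; rewrite /gi.
  have [i0|i0] := eqVneq (i : nat) 0.
    by rewrite /f i0 /= eqxx.
  have [hi4|hi4] := boolP (i <= n - 4).
    have hj : i.-1 < n - 4 by rewrite -subn1; move: i0 hi4; clear; lia.
    have -> : f i = nth v (enum L) i.-1 by rewrite /f (negbTE i0) hi4.
    have hm := Lin i.-1 hj.
    have -> : (nth v (enum L) i.-1 == v) = false.
      by apply/negP => /eqP E; move: vL; rewrite -E hm.
    rewrite hm index_uniq ?enum_uniq //; last exact: leq_trans hj cL'. rewrite -subn1; move: i0; clear; lia.
  have [i3|i3] := eqVneq (i : nat) (n - 3).
    have -> : f i = u by rewrite /f (negbTE i0) (negbTE hi4) i3 eqxx.
    by rewrite (negbTE uv) (negbTE uL) eqxx.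
  have [i2|i2] := eqVneq (i : nat) (n - 2).
    have -> : f i = w1 by rewrite /f (negbTE i0) (negbTE hi4) (negbTE i3) i2 eqxx.
    by rewrite (negbTE w1v) (negbTE w1L) eq_sym (negbTE uw1) eqxx.
  have -> : f i = w2 by rewrite /f (negbTE i0) (negbTE hi4) (negbTE i3) (negbTE i2).
  rewrite (negbTE w2v) (negbTE w2L) eq_sym (negbTE uw2) eq_sym (negbTE w12).
  have := ltn_ord i; move: hi4 i3 i2 i0; clear; lia.
have finj : injective f.
  move=> i j /(congr1 gi); rewrite !gif => E; exact: val_inj.
apply: nT; exists f; split => //.
have f0 : forall i : 'I_n, (i : nat) = 0 -> f i = v.
  by move=> i i0; rewrite /f i0.
have fL : forall i : 'I_n, 0 < i <= n - 4 -> g v (f i).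
  move=> i /andP [i0 i4].
  have hj : i.-1 < n - 4 by rewrite -subn1; move: i0 i4; clear; lia.
  have -> : f i = nth v (enum L) i.-1.
    rewrite /f i4; have -> : ((i : nat) == 0) = false by move: i0; clear; lia.
    by [].
  move: (Lin _ hj) => /(subsetP sL); by rewrite inE.
have fu : forall i : 'I_n, (i : nat) = n - 3 -> f i = u.
  move=> i ii; rewrite /f ii.
  have -> : (n - 3 == 0) = false by move: n4; clear; lia.
  have -> : (n - 3 <= n - 4) = false by move: n4; clear; lia.
  by rewrite eqxx.
have fw1 : forall i : 'I_n, (i : nat) = n - 2 -> f i = w1.
  move=> i ii; rewrite /f ii.
  have -> : (n - 2 == 0) = false by move: n4; clear; lia.
  have -> : (n - 2 <= n - 4) = false by move: n4; clear; lia.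
  have -> : (n - 2 == n - 3) = false by move: n4; clear; lia.
  by rewrite eqxx.
have fw2 : forall i : 'I_n, (i : nat) = n - 1 -> f i = w2.
  move=> i ii; rewrite /f ii.
  have -> : (n - 1 == 0) = false by move: n4; clear; lia.
  have -> : (n - 1 <= n - 4) = false by move: n4; clear; lia.
  have -> : (n - 1 == n - 3) = false by move: n4; clear; lia.
  have -> : (n - 1 == n - 2) = false by move: n4; clear; lia.
  by [].
have arc : forall i j, T2_arc i j -> g (f i) (f j).
  move=> i j; rewrite /T2_arc.
  case/orP => /andP [/eqP i0 Hj].
    rewrite (f0 _ i0).
    have [j4|j4] := boolP (j <= n - 4).
      apply: fL; move: Hj j4; clear; lia.
    rewrite (fu j) //; move: Hj j4; clear; lia.
  rewrite (fu _ i0).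
  case/orP: Hj => /eqP Hj; [rewrite (fw1 _ Hj) // | rewrite (fw2 _ Hj) //].
move=> i j; rewrite /T2 => /orP [/arc //| /arc]; by rewrite sg.
Qed.

Lemma cardD_ge (T : finType) (A B C : {set T}) :
  A :&: B \subset C -> #|A| - #|C| <= #|A :\: B|.
Proof. move=> H; rewrite cardsD; have := subset_leq_card H; lia. Qed.

Lemma card3 (T : finType) (a b c : T) : #|[set a; b; c]| <= 3.
Proof. rewrite cardsU cards2 cards1; case: (a != b); lia. Qed.

Lemma card2 (T : finType) (a b : T) : #|[set a; b]| <= 2.
Proof. rewrite cards2; by case: (a != b). Qed.

Lemma noT' p n (g : rel 'I_p) v u w1 w2 (C : {set 'I_p}) k :
  simple_graph g -> ~ contains g (T2 n) -> 4 <= n ->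
  g v u -> g u w1 -> g u w2 -> w1 != w2 -> w1 != v -> w2 != v ->
  [set x | g v x] :&: [set u; w1; w2] \subset C -> #|C| <= k ->
  n - 4 + k <= degree g v -> False.
Proof.
move=> sg nT n4 gvu g1 g2 w12 w1v w2v sC Ck dv.
apply: (noT (L := [set x | g v x] :\: [set u; w1; w2])) sg nT n4 gvu g1 g2 w12 w1v w2v _ _ _ _ _.
- by apply/subsetP => x; rewrite inE => /andP [].
- by rewrite !inE eqxx.
- by rewrite !inE eqxx !orbT.
- by rewrite !inE eqxx !orbT.
- apply: leq_trans (cardD_ge sC); move: dv; rewrite /degree.
  move: #|[set x | g v x]| #|C| Ck => a c; clear; lia.
Qed.

Lemma condA p n (g : rel 'I_p) v u :
  simple_graph g -> ~ contains g (T2 n) -> 7 <= n ->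
  n - 1 <= degree g v -> g v u -> #|[set w | g u w & w != v]| <= 1.
Proof.
move=> sg nT n7 dv gvu; rewrite leqNgt; apply/negP => /card_gt1P [w1 [w2 []]].
rewrite !inE => /andP [g1 w1v] /andP [g2 w2v] w12.
apply: (noT' (C := [set u; w1; w2]) (k := 3)) sg nT _ gvu g1 g2 w12 w1v w2v _ _ _ => //.
- lia.
- exact: subsetIr.
- exact: card3.
- lia.
Qed.

Lemma condB p n (g : rel 'I_p) v u w :
  simple_graph g -> ~ contains g (T2 n) -> 7 <= n ->
  n - 2 <= degree g v -> g v u -> g u w -> w != v -> ~~ g v w ->
  #|[set w' | g u w' & w' != v]| <= 1.
Proof.
move=> sg nT n7 dv gvu guw wv nvw; rewrite leqNgt; apply/negP => /card_gt1P [w1 [w2 []]].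
rewrite !inE => /andP [g1 w1v] /andP [g2 w2v] w12.
pose w' := if w1 == w then w2 else w1.
have gw' : g u w' by rewrite /w'; case: ifP.
have w'v : w' != v by rewrite /w'; case: ifP.
have ww' : w != w'.
  rewrite /w'; case: ifP => [/eqP E|/negbT]; last by rewrite eq_sym.
  by rewrite -E.
apply: (noT' (C := [set u; w']) (k := 2)) sg nT _ gvu guw gw' ww' wv w'v _ _ _ => //.
- lia.
- apply/subsetP => x; rewrite !inE => /andP [gvx H].
  case/orP: H => [/orP [] | ] /eqP E; rewrite ?E ?eqxx ?orbT //.
  by move: nvw; rewrite -E gvx.
- exact: card2.
- lia.
Qed.

Lemma condC p n (g : rel 'I_p) v u :
  simple_graph g -> ~ contains g (T2 n) -> 7 <= n ->
  n - 3 <= degree g v -> g v u ->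
  #|[set w | g u w & (w != v) && ~~ g v w]| <= 1.
Proof.
move=> sg nT n7 dv gvu; rewrite leqNgt; apply/negP => /card_gt1P [w1 [w2 []]].
rewrite !inE => /andP [g1 /andP [w1v n1]] /andP [g2 /andP [w2v n2]] w12.
apply: (noT' (C := [set u]) (k := 1)) sg nT _ gvu g1 g2 w12 w1v w2v _ _ _ => //.
- lia.
- apply/subsetP => x; rewrite !inE => /andP [gvx H].
  case/orP: H => [/orP [] | ] /eqP E; rewrite ?E ?eqxx //.
  by move: n1; rewrite -E gvx.
  by move: n2; rewrite -E gvx.
- by rewrite cards1.
- lia.
Qed.

Definition cS p (g : rel 'I_p) (S : {set 'I_p}) x :=
  degree g x + #|[set y | g x y & y \notin S]|.

Lemma sum_split p (g : rel 'I_p) (S : {set 'I_p}) : symmetric g ->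
  \sum_x \sum_y (g x y : nat) =
  \sum_(x in S) cS g S x + \sum_x \sum_y ((x \notin S) && (y \notin S) && g x y : nat).
Proof.
move=> sg.
have P1 : forall x y, (g x y : nat) = ((x \in S) && g x y) + ((x \notin S) && (y \in S) && g x y)
    + ((x \notin S) && (y \notin S) && g x y).
  by move=> x y; case: (x \in S); case: (y \in S); case: (g x y).
under eq_bigr => x _ do (under eq_bigr => y _ do rewrite P1; rewrite !big_split /=).
rewrite !big_split /=; congr (_ + _).
have E2 : \sum_x \sum_y ((x \notin S) && (y \in S) && g x y : nat) =
          \sum_x \sum_y ((x \in S) && (g x y && (y \notin S)) : nat).
  transitivity (\sum_x \sum_y ((y \notin S) && (x \in S) && g y x : nat)).
    exact: exchange_big.
  apply: eq_bigr => x _; apply: eq_bigr => y _.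
  rewrite (sg y x); by case: (x \in S); case: (y \in S); case: (g x y).
rewrite E2 -!big_split /= [RHS]big_mkcond /=; apply: eq_bigr => x _.
rewrite /degree !card_sum.
case: (x \in S) => /=; last by rewrite !big1.
by [].
Qed.

Lemma hS_lem p (g : rel 'I_p) (S : {set 'I_p}) x y :
  (if x \in S then (y \in S) && (x != y) else (y \notin S) && g x y) ->
  (x \in S) = (y \in S).
Proof. by case: (x \in S); case: (y \in S). Qed.

Lemma replace p n (g : rel 'I_p) (S : {set 'I_p}) :
  in_Ex (T2 n) g -> 4 <= n -> #|S| = n - 1 ->
  \sum_(x in S) cS g S x < (n - 1) * (n - 2) -> False.
Proof.
move=> [[sg ig] [nT maxE]] n4 cardS hsum.
pose h (x y : 'I_p) := if x \in S then (y \in S) && (x != y) else (y \notin S) && g x y.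
have sh : simple_graph h.
  split.
  - move=> x y; rewrite /h; case xS: (x \in S); case yS: (y \in S) => //=;
    by rewrite ?(eq_sym x) ?(sg x y).
  - by move=> x; rewrite /h; case: (x \in S); rewrite ?eqxx ?andbF ?ig ?andbF.
have nTh : ~ contains h (T2 n).
  move=> [f [finj fe]].
  have n0 : 0 < n by lia.
  have n3 : n - 3 < n by lia.
  pose i0 := Ordinal n0. pose j3 := Ordinal n3.
  have arc0 : forall i : 'I_n, 1 <= i <= n - 3 -> T2 n i0 i.
    by move=> i hi; rewrite /T2 /T2_arc /= hi.
  have arc3 : forall i : 'I_n, (i == n - 2 :> nat) || (i == n - 1 :> nat) -> T2 n j3 i.
    by move=> i hi; apply/orP; left; apply/orP; right; rewrite /= eqxx hi.
  have allS : forall i, (f i \in S) = (f i0 \in S).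
    have E3 : (f j3 \in S) = (f i0 \in S).
      symmetry; apply: (@hS_lem _ g); apply: fe; apply: arc0 => /=; lia.
    move=> [i hi].
    have [iz|iz] := eqVneq i 0.
      by congr (f _ \in S); apply: val_inj.
    have [i3|i3] := boolP (i <= n - 3).
      symmetry; apply: (@hS_lem _ g); apply: fe; apply: arc0 => /=; lia.
    rewrite -E3; symmetry; apply: (@hS_lem _ g); apply: fe; apply: arc3 => /=.
    move: i3 hi; clear; lia.
  case fS: (f i0 \in S).
    have sub : [set f i | i in 'I_n] \subset S.
      by apply/subsetP => y /imsetP [i _ ->]; rewrite allS.
    have := subset_leq_card sub; rewrite card_imset // card_ord cardS; lia.
  apply: nT; exists f; split => // i j /fe; rewrite /h allS fS.
  by case/andP.
have le := maxE h sh nTh.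
have := edges2 sh.1 sh.2; have := edges2 sg ig.
have EG := sum_split S sg.
have EH : \sum_x \sum_y (h x y : nat) = #|S| * (#|S| - 1) +
   \sum_x \sum_y ((x \notin S) && (y \notin S) && g x y : nat).
  have P : forall x, \sum_y (h x y : nat) = ((x \in S) : nat) * (#|S| - 1) +
       \sum_y ((x \notin S) && (y \notin S) && g x y : nat).
    move=> x; rewrite /h; case xS: (x \in S) => /=.
      rewrite [X in _ = _ + X]big1 // mul1n addn0.
      rewrite -card_sum (cardsD1 x S) xS add1n subn1 /=; apply: eq_card => y.
      by rewrite !inE eq_sym andbC.
    by rewrite mul0n add0n.
  under eq_bigr => x _ do rewrite P.
  rewrite big_split /=; congr (_ + _).
  rewrite -sum_nat_const [RHS]big_mkcond /=; apply: eq_bigr => x _.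
  by case: (x \in S); rewrite ?mul1n ?mul0n.
have DG : \sum_x degree g x = \sum_x \sum_y (g x y : nat).
  by apply: eq_bigr => x _; rewrite deg_sum.
have DH : \sum_x degree h x = \sum_x \sum_y (h x y : nat).
  by apply: eq_bigr => x _; rewrite deg_sum.
rewrite DG DH EG EH cardS.
move: hsum le; set R := \sum_x \sum_y _; set Q := \sum_(x in S) _.
move: (n_edges g) (n_edges h) => a b.
have : (n - 1) * (n - 2) = (n - 1) * (n - 1 - 1) by congr (_ * _); lia.
nia.
Qed.

Lemma count_ord p (P : pred nat) : #|[set t : 'I_p | P t]| = \sum_(0 <= t < p) (P t : nat).
Proof. by rewrite card_sum big_mkord. Qed.

Lemma sum_range a b (P : pred nat) c : a <= b ->
  (forall t, a <= t < b -> P t = c) -> \sum_(a <= t < b) (P t : nat) = (b - a) * c.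
Proof.
move=> ab H; rewrite -sum_nat_const_nat; apply: eq_big_nat => t /H ->; by [].
Qed.

Lemma sum_cat a b c (F : nat -> nat) : a <= b -> b <= c ->
  \sum_(a <= i < c) F i = \sum_(a <= i < b) F i + \sum_(b <= i < c) F i.
Proof. move=> ab bc; exact: big_cat_nat. Qed.

Definition mm (k : nat) := k %/ 2.
Definition hh (p : nat) := p %/ 2.
Definition dd (p x y : nat) := if x <= y then y - x else p - (x - y).
Definition inC (p k d : nat) := (0 < d) && ((d <= mm k) || (p - mm k <= d)).
Definition mt (p k x y : nat) := odd k && (((x < hh p) && (y == x + hh p)) || ((y < hh p) && (x == y + hh p))).
Definition H0 (p k : nat) : rel 'I_p := fun x y => inC p k (dd p x y) || mt p k x y.


Lemma H0_simple (p k : nat) (k3 : 3 <= k) (kp : k + 4 <= p) : simple_graph (@H0 p k).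
Proof.
split.
- move=> [x hx] [y hy]; rewrite /H0 /inC /dd /mt /mm /hh /=.
  case: ifP; case: ifP => *; lia.
- move=> [x hx]; rewrite /H0 /inC /dd /mt /mm /hh /=; rewrite leqnn subnn /=.
  lia.
Qed.

Lemma card_inC (p k : nat) (k3 : 3 <= k) (kp : k + 4 <= p) : #|[set t : 'I_p | inC p k t]| = 2 * (mm k).
Proof.
rewrite count_ord.
have m1 : 1 <= (mm k) by rewrite /mm; lia.
have m2 : 2 * (mm k) < p by rewrite /mm; lia.
rewrite (@sum_cat 0 1 p) ?(@sum_cat 1 ((mm k) + 1) p) ?(@sum_cat ((mm k) + 1) (p - (mm k)) p); try lia.
rewrite (@sum_range 0 1 _ false); last (by move=> t ht; rewrite /inC; lia); last lia.
rewrite (@sum_range 1 ((mm k) + 1) _ true); last (by move=> t ht; rewrite /inC; lia); last lia.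
rewrite (@sum_range ((mm k) + 1) (p - (mm k)) _ false); last (by move=> t ht; rewrite /inC; lia); last lia.
rewrite (@sum_range (p - (mm k)) p _ true); last (by move=> t ht; rewrite /inC; lia); last lia.
lia.
Qed.

Lemma deg_inC (p k : nat) (k3 : 3 <= k) (kp : k + 4 <= p) (x : 'I_p) : #|[set y : 'I_p | inC p k (dd p x y)]| = 2 * (mm k).
Proof.
have dlt : forall y : 'I_p, dd p x y < p.
  move=> y; have := ltn_ord x; have := ltn_ord y; rewrite /dd; case: ifP => *; lia.
pose phi (y : 'I_p) : 'I_p := Ordinal (dlt y).
have phiinj : injective phi.
  move=> y z /(congr1 val) /=; rewrite /dd => E; apply: val_inj => /=.
  move: E; have := ltn_ord x; have := ltn_ord y; have := ltn_ord z.
  case: ifP; case: ifP => *; lia.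
rewrite -(card_inC k3 kp) -[RHS](card_preimset _ phiinj); apply: eq_card => y.
by rewrite !inE /=.
Qed.

Lemma deg_mt (p k : nat) (k3 : 3 <= k) (kp : k + 4 <= p) (x : 'I_p) : #|[set y : 'I_p | mt p k x y]| = odd k && (x < 2 * (hh p)).
Proof.
have h1 : 1 <= (hh p) by rewrite /hh; lia.
have h2 : 2 * (hh p) <= p by rewrite /hh; lia.
rewrite /mt; case: (odd k) => /=; last by rewrite (eq_card (B := pred0)) ?card0 // => y; rewrite inE.
have [xl|xl] := ltnP x (hh p).
  have lt : x + (hh p) < p by lia.
  rewrite (eq_card (B := pred1 (Ordinal lt))) ?card1; first by have -> : x < 2 * (hh p) by lia.
  move=> y; rewrite !inE /=; apply/idP/idP.
    move=> H; rewrite -val_eqE /=; move: H; lia.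
  move/eqP => -> /=; lia.
have [xl2|xl2] := ltnP x (2 * (hh p)).
  have lt : x - (hh p) < p by lia.
  rewrite (eq_card (B := pred1 (Ordinal lt))) ?card1 //.
  move=> y; rewrite !inE /=; apply/idP/idP.
    move=> H; rewrite -val_eqE /=; move: H; lia.
  move/eqP => -> /=; lia.
rewrite (eq_card (B := pred0)) ?card0 //.
by move=> y; rewrite !inE; lia.
Qed.

Lemma deg_H0 (p k : nat) (k3 : 3 <= k) (kp : k + 4 <= p) (x : 'I_p) : degree (@H0 p k) x = 2 * (mm k) + (odd k && (x < 2 * (hh p))).
Proof.
rewrite /degree.
have -> : [set y | (@H0 p k) x y] = [set y : 'I_p | inC p k (dd p x y)] :|: [set y : 'I_p | mt p k x y].
  by apply/setP => y; rewrite !inE.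
have := cardsUI [set y : 'I_p | inC p k (dd p x y)] [set y : 'I_p | mt p k x y].
have -> : [set y : 'I_p | inC p k (dd p x y)] :&: [set y : 'I_p | mt p k x y] = set0.
  apply/setP => y; rewrite !inE /mt /inC /dd /mm /hh.
  have := ltn_ord x; have := ltn_ord y; case: ifP => *; lia.
rewrite cards0 addn0 => ->.
by rewrite (deg_inC k3 kp) (deg_mt k3 kp).
Qed.





Lemma H0_edges p k : 3 <= k -> k + 4 <= p ->
  k * p <= 2 * n_edges (@H0 p k) + 1.
Proof.
move=> k3 kp.
have [s i] := @H0_simple p k k3 kp.
rewrite (edges2 s i).
under eq_bigr => x _ do rewrite (deg_H0 k3 kp).
rewrite big_split /= sum_nat_const card_ord.
have E : \sum_(x < p) (odd k && (x < 2 * hh p) : nat) = odd k * (2 * hh p).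
  case: (odd k); last by rewrite big1.
  rewrite mul1n.
  transitivity (\sum_(0 <= t < p) ((t < 2 * hh p) : nat)); first by rewrite big_mkord.
  have h2 : 2 * hh p <= p by rewrite /hh; lia.
  rewrite (@sum_cat 0 (2 * hh p) p _) //.
  rewrite (@sum_range 0 (2 * hh p) _ true); try (by move=> t ht; lia); try done.
  rewrite (@sum_range (2 * hh p) p _ false); try (by move=> t ht; lia); try done.
  lia.
rewrite E.
have ek := odd_double_half k; have ep := odd_double_half p.
rewrite /mm /hh !divn2.
move: ek ep; rewrite -!muln2.
case: (odd k); case: (odd p) => /=; nia.
Qed.

Lemma degT q n (h : rel 'I_q) : 4 <= n -> contains h (T2 n) ->
  exists x, n - 3 <= degree h x.
Proof.
move=> n4 [f [finj fe]].
have n0 : 0 < n by lia.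
pose i0 := Ordinal n0.
have il : forall j : 'I_(n - 3), j.+1 < n by move=> j; have := ltn_ord j; lia.
pose io (j : 'I_(n - 3)) : 'I_n := Ordinal (il j).
exists (f i0).
have inj : injective (fun j => f (io j)).
  move=> a b /finj /(congr1 val) /= E; apply: val_inj; case: E => E; exact: E.
have sub : [set f (io j) | j in 'I_(n - 3)] \subset [set y | h (f i0) y].
  apply/subsetP => y /imsetP [j _ ->]; rewrite inE; apply: fe.
  rewrite /T2 /T2_arc /=; have := ltn_ord j; move=> ->; by [].
have := subset_leq_card sub; rewrite card_imset // card_ord.
by [].
Qed.

Lemma exists_out T (S : {set T}) : #|S| < #|T| -> exists y, y \notin S.
Proof.
move=> H; case: (pickP (fun y => y \notin S)) => [y Hy|H0]; first by exists y.
have : [set: T] \subset S by apply/subsetP => y _; move: (H0 y) => /negbFE.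
move/subset_leq_card; rewrite cardsT; lia.
Qed.

Lemma subset_card T (A : {set T}) k : k <= #|A| -> exists B : {set T}, B \subset A /\ #|B| = k.
Proof.
elim: k => [|k IH] hk; first by exists set0; split; [exact: sub0set | exact: cards0].
have [B [sBA cB]] := IH (ltnW hk).
have : 0 < #|A :\: B| by rewrite cardsD (setIidPr sBA); lia.
case/card_gt0P => x /setDP [xA xB].
exists (x |: B); split; last by rewrite cardsU1 xB cB.
by apply/subsetP => y; rewrite !inE => /orP [/eqP -> //|/(subsetP sBA)].
Qed.

Lemma conn_edge p (g : rel 'I_p) (S : {set 'I_p}) v y :
  connected g -> symmetric g -> v \in S -> y \notin S ->
  exists x z, [/\ x \in S, z \notin S & g x z].
Proof.
move=> conn sg vS yS.
case: (pickP (fun xz : 'I_p * 'I_p => [&& xz.1 \in S, xz.2 \notin S & g xz.1 xz.2])).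
  move=> [x z] /and3P [h1 h2 h3]; by exists x, z.
move=> none.
have cl : closed g (mem S).
  move=> x z gxz; rewrite ?inE.
  case xS: (x \in S); case zS: (z \in S) => //.
  - by move: (none (x, z)); rewrite /= xS zS gxz.
  - by move: (none (z, x)); rewrite /= xS zS sg gxz.
have := closed_connect cl (conn v y); rewrite ?inE vS; move: yS; by case: (y \in S).
Qed.

Lemma card_le1_eq T (A : {set T}) x y : #|A| <= 1 -> x \in A -> y \in A -> x = y.
Proof.
move=> H xA yA; apply/eqP; apply/negPn/negP => xy.
move: H; rewrite leqNgt => /negP; apply; apply/card_gt1P; by exists x, y.
Qed.

Lemma sum_bound2 T (S : {set T}) (F : T -> nat) c x0 b :
  x0 \in S -> (forall x, x \in S -> x != x0 -> F x <= c) -> F x0 <= b ->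
  \sum_(x in S) F x <= b + (#|S| - 1) * c.
Proof.
move=> x0S H Hb; rewrite (bigD1 x0) //=; apply: leq_add => //.
have -> : #|S| - 1 = #|S :\ x0| by rewrite (cardsD1 x0 S) x0S add1n subn1.
rewrite -sum_nat_const.
rewrite (eq_bigl (fun x => x \in S :\ x0)); last by move=> x; rewrite !inE andbC.
by apply: leq_sum => x; rewrite !inE => /andP [h1 h2]; apply: H.
Qed.



Lemma outd_le p (g : rel 'I_p) (S : {set 'I_p}) x : #|[set y | g x y & y \notin S]| <= degree g x.
Proof. apply: subset_leq_card; apply/subsetP => y; rewrite !inE => /andP []. by []. Qed.

Lemma outd0 p (g : rel 'I_p) (S : {set 'I_p}) x :
  (forall w, g x w -> w \in S) -> #|[set y | g x y & y \notin S]| = 0.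
Proof.
move=> H; apply/eqP; rewrite cards_eq0; apply/eqP/setP => y; rewrite !inE.
by case gy: (g x y) => //=; rewrite (H _ gy).
Qed.

Lemma deg_le2 p (g : rel 'I_p) x v :
  #|[set w | g x w & w != v]| <= 1 -> degree g x <= 2.
Proof.
move=> H; rewrite /degree.
have sub : [set y | g x y] \subset v |: [set w | g x w & w != v].
  apply/subsetP => y; rewrite !inE => gy; rewrite gy /=; by case: (y == v).
have := subset_leq_card sub; rewrite cardsU1; move: H; case: (v \notin _) => /=; lia.
Qed.

Lemma main_le p n (g : rel 'I_p) : in_Ex (T2 n) g -> connected g -> 7 <= n -> n <= p ->
  max_degree g <= n - 4.
Proof.
move=> iE conn n7 np; have [[sg ig] [nT maxE]] := iE.
have sim : simple_graph g := conj sg ig.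
have p0 : 0 < #|'I_p| by rewrite card_ord; lia.
have [v Dv] := eq_bigmax (fun x => degree g x) p0.
rewrite /max_degree Dv leqNgt; apply/negP => hv.
have dmax : forall x, degree g x <= degree g v by move=> x; rewrite -Dv; exact: leq_bigmax.
have n4 : 4 <= n by lia.
have [D1|D1] := leqP (n - 1) (degree g v).
  have [S [sS cS']] := subset_card (A := [set y | g v y]) (k := n - 1) D1.
  apply: (@replace _ _ _ S iE n4 cS').
  apply: (@leq_ltn_trans (\sum_(x in S) 4)).
    apply: leq_sum => x xS.
    have gvx : g v x by move: (subsetP sS x xS); rewrite inE.
    have d2 := deg_le2 (condA sim nT n7 D1 gvx).
    rewrite /cS; have := outd_le g S x; lia.
  rewrite sum_nat_const cS'; nia.
have [D2|D2] := leqP (n - 2) (degree g v).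
  pose S := v |: [set y | g v y].
  have cS' : #|S| = n - 1.
    rewrite cardsU1 inE ig /=; change (1 + degree g v = n - 1); lia.
  have [y yS] := exists_out (S := S) ltac:(rewrite cS' card_ord; lia).
  have vS : v \in S by rewrite !inE eqxx.
  have [x0 [z [x0S zS gx0z]]] := conn_edge conn sg vS yS.
  have NS : forall w, g v w -> w \in S by move=> w gw; rewrite !inE gw orbT.
  have x0v : x0 != v.
    by apply/negP => /eqP E; move: zS; rewrite (NS z) // -E.
  have bnd4 : forall x w, g v x -> g x w -> w \notin S -> cS g S x <= 4.
    move=> x w gvx gxw wS.
    have wv : w != v by apply/negP => /eqP E; move: wS; rewrite E vS.
    have nvw : ~~ g v w by apply/negP => /NS; rewrite (negbTE wS).
    have d2 := deg_le2 (condB sim nT n7 D2 gvx gxw wv nvw).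
    rewrite /cS; have := outd_le g S x; lia.
  apply: (@replace _ _ _ S iE n4 cS').
  apply: (@leq_ltn_trans (4 + (#|S| - 1) * (n - 2))); last by rewrite cS'; nia.
  apply: (@sum_bound2 _ S (cS g S) (n - 2) x0 4 x0S).
    move=> x xS _.
    have [xv|xv] := eqVneq x v.
      by rewrite /cS xv outd0 // addn0; lia.
    have gvx : g v x by move: xS; rewrite !inE (negbTE xv).
    case: (pickP (fun w => g x w && (w \notin S))) => [w /andP [gxw wS]|none].
      have := bnd4 x w gvx gxw wS; lia.
    rewrite /cS outd0; last by move=> w gxw; move: (none w); rewrite gxw /=; case: (w \in S).
    have := dmax x; lia.
  have gvx0 : g v x0 by move: x0S; rewrite !inE (negbTE x0v).
  exact: bnd4 gvx0 gx0z zS.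
have D3 : degree g v = n - 3 by lia.
have D3' : n - 3 <= degree g v by lia.
pose N1 := v |: [set y | g v y].
have cN1 : #|N1| = n - 2.
  rewrite cardsU1 inE ig /=; change (1 + degree g v = n - 2); lia.
have vN1 : v \in N1 by rewrite !inE eqxx.
have NN1 : forall w, g v w -> w \in N1 by move=> w gw; rewrite !inE gw orbT.
have condCv : forall x, g v x -> #|[set w | g x w & (w != v) && ~~ g v w]| <= 1.
  by move=> x gvx; apply: condC sim nT n7 D3' gvx.
have outN1 : forall (S : {set 'I_p}) x, N1 \subset S ->
    [set w | g x w & w \notin S] \subset [set w | g x w & (w != v) && ~~ g v w].
  move=> S x sub; apply/subsetP => w; rewrite !inE => /andP [-> wS] /=.
  apply/andP; split.
    by apply/negP => /eqP E; move: wS; rewrite E (subsetP sub _ vN1).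
  by apply/negP => /NN1 /(subsetP sub); rewrite (negbTE wS).
case: (boolP [exists u, exists a', [&& g v u, g u a', a' \notin N1 & degree g u == n - 3]]).
  case/existsP => u /existsP [a' /and4P [gvu gua aN1 /eqP du]].
  pose S := a' |: N1.
  have cS' : #|S| = n - 1 by rewrite cardsU1 aN1 cN1; lia.
  have sub : N1 \subset S by apply/subsetP => w wN; apply/setU1P; right.
  apply: (@replace _ _ _ S iE n4 cS').
  apply: (@leq_ltn_trans (n - 3 + (#|S| - 1) * (n - 2))); last by rewrite cS'; nia.
  apply: (@sum_bound2 _ S (cS g S) (n - 2) v (n - 3)).
  - exact: (subsetP sub).
  - move=> x xS xv.
    have [xa|xa] := eqVneq x a'.
      rewrite xa /cS.
      have dd := dmax a'.
      have uS : u \in S by apply: (subsetP sub); apply: NN1.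
      have le1 : #|[set w | g a' w & w \notin S]| <= 1.
        apply: leq_trans (condC sim nT n7 (ltac:(lia) : n - 3 <= degree g u) gua).
        apply: subset_leq_card; apply/subsetP => w; rewrite !inE => /andP [-> wS] /=.
        have [wa wv nvw] : [/\ w != a', w != v & ~~ g v w].
          by move: wS; case: (w == a'); case: (w == v); case: (g v w).
        have [av nva] : a' != v /\ ~~ g v a'.
          by move: aN1; rewrite !inE; case: (a' == v); case: (g v a').
        apply/andP; split.
          by apply/negP => /eqP E; move: nvw; rewrite E gvu.
        apply/negP => guw.
        have E := card_le1_eq (condCv u gvu) (x := w) (y := a')
          ltac:(by rewrite !inE guw wv nvw) ltac:(by rewrite !inE gua av nva).
        by move: wa; rewrite E eqxx.
      apply: leq_trans (leq_add dd le1) _; rewrite D3; lia.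
    have gvx : g v x by move: xS; rewrite !inE (negbTE xa) (negbTE xv).
    rewrite /cS; have := dmax x; have := subset_leq_card (outN1 S x sub);
    have := condCv x gvx; lia.
  - rewrite /cS outd0; first by lia.
    by move=> w gw; apply: (subsetP sub); apply: NN1.
rewrite negb_exists => /forallP nex.
have [a aN1] := exists_out (S := N1) ltac:(rewrite cN1 card_ord; lia).
pose S := a |: N1.
have cS' : #|S| = n - 1 by rewrite cardsU1 aN1 cN1; lia.
have sub : N1 \subset S by apply/subsetP => w wN; apply/setU1P; right.
apply: (@replace _ _ _ S iE n4 cS').
apply: (@leq_ltn_trans (2 * (n - 3) + (#|S| - 1) * (n - 3))); last by rewrite cS'; nia.
apply: (@sum_bound2 _ S (cS g S) (n - 3) a (2 * (n - 3))).
- by rewrite !inE eqxx.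
- move=> x xS xa.
  have [xv|xv] := eqVneq x v.
    by rewrite /cS xv outd0 ?D3 ?addn0 // => w gw; apply: (subsetP sub); apply: NN1.
  have gvx : g v x by move: xS; rewrite !inE (negbTE xa) (negbTE xv).
  case: (pickP (fun w => g x w && (w \notin S))) => [w /andP [gxw wS]|none].
    have wN1 : w \notin N1 by apply/negP => /(subsetP sub); rewrite (negbTE wS).
    have := nex x; rewrite negb_exists => /forallP /(_ w); rewrite gvx gxw wN1 /= => dx.
    rewrite /cS; have := dmax x; have := subset_leq_card (outN1 S x sub);
    have := condCv x gvx; move: dx; rewrite D3; move/eqP; lia.
  rewrite /cS outd0; last by move=> w gxw; move: (none w); rewrite gxw /=; case: (w \in S).
  have := dmax x; lia.
- rewrite /cS; have := dmax a; have := outd_le g S a; lia.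
Qed.

Theorem lemma3p3 (p n : nat) (g : rel 'I_p) :
  7 <= n -> n <= p -> in_Ex (T2 n) g -> connected g ->
  max_degree g = n - 4 /\ n_edges g = ((n - 4) * p) %/ 2.
Proof.
move=> n7 np iE conn.
have le := main_le iE conn n7 np.
have [[sg ig] [nT maxE]] := iE.
have k3 : 3 <= n - 4 by lia.
have kp : n - 4 + 4 <= p by lia.
have [H0s H0i] := @H0_simple p (n - 4) k3 kp.
have nT0 : ~ contains (@H0 p (n - 4)) (T2 n).
  move=> c; have [x dx] := degT (ltac:(lia) : 4 <= n) c.
  move: dx; rewrite (deg_H0 k3 kp) /mm divn2.
  have := odd_double_half (n - 4); rewrite -muln2.
  case: (odd (n - 4)) => /=; case: (x < 2 * hh p) => /=; lia.
have e0 := maxE _ (conj H0s H0i) nT0.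
have ek := H0_edges k3 kp.
have s2 : 2 * n_edges g <= p * max_degree g.
  rewrite (edges2 sg ig).
  apply: (@leq_trans (\sum_(x < p) max_degree g)).
    by apply: leq_sum => x _; exact: leq_bigmax.
  by rewrite sum_nat_const card_ord.
have dv := divn_eq ((n - 4) * p) 2.
have dm := ltn_pmod ((n - 4) * p) (isT : 0 < 2).
move: dv dm; set X := (n - 4) * p; set q := X %/ 2; set r := X %% 2 => dv dm.
have hX : X <= 2 * n_edges g + 1 by rewrite /X; lia.
have hd : max_degree g = n - 4.
  apply/eqP; rewrite eqn_leq le /=; rewrite leqNgt; apply/negP => hlt.
  have : p * max_degree g <= p * (n - 5) by apply: leq_mul => //; lia.
  rewrite /X in hX; nia.
split => //.
rewrite hd in s2; rewrite /X in hX dv; nia.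
Qed.
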